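(* Let $\nu\in\mathbb{C}$ and $a,b,x>0$. Then $$J_{\nu}(ax)J_{\nu}(bx)=\left(\frac{abx}{2\sqrt{a^2+b^2}}\right)^{\nu}\sum_{r=0}^{\infty}\frac{1}{r!\,\Gamma(\nu+r+1)}\left(\frac{abx}{2\sqrt{a^2+b^2}}\right)^{2r}J_{\nu+2r}\!\left(x\sqrt{a^2+b^2}\right).$$
   Context: $J_\nu$ is the Bessel function of the first kind of order $\nu$; $1/\Gamma$ is understood as the entire reciprocal Gamma function. *)

(* Defs.v *)
From Stdlib Require Import Reals Factorial.
From Coquelicot Require Import Coquelicot.
Open Scope R_scope.

Definition Cexp (z : C) : C :=
  (exp (Re z) * cos (Im z), exp (Re z) * sin (Im z)).

Definition Rcpow (t : R) (z : C) : C := Cexp (Cmult z (RtoC (ln t))).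

(* limit of a complex sequence (componentwise; meaningful when it converges) *)
Definition Clim_seq (u : nat -> C) : C :=
  (real (Lim_seq (fun n => Re (u n))), real (Lim_seq (fun n => Im (u n)))).

Definition CSeries (a : nat -> C) : C := Clim_seq (fun n => sum_n a n).

Fixpoint rising_prod (z : C) (n : nat) : C :=
  match n with
  | O => z
  | S m => Cmult (rising_prod z m) (Cplus z (RtoC (INR (S m))))
  end.

(* Entire reciprocal Gamma function via Gauss' formula:
   1/Gamma(z) = lim_{n->oo} z(z+1)...(z+n) / (n! n^z), valid for all z in C. *)
Definition rgamma (z : C) : C :=
  Clim_seq (fun n => Cdiv (rising_prod z n)
                          (Cmult (RtoC (INR (fact n))) (Rcpow (INR n) z))).

(* Bessel function of the first kind, for real argument x > 0:
   J_nu(x) = sum_k (-1)^k / (k! Gamma(nu+k+1)) (x/2)^(nu+2k). *)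
Definition BesselJ (nu : C) (x : R) : C :=
  Cmult (Rcpow (x / 2) nu)
    (CSeries (fun k => Cmult (RtoC ((-1) ^ k / INR (fact k) * (x / 2) ^ (2 * k)))
                             (rgamma (Cplus nu (RtoC (INR (S k))))))).

(* Main.v *)
Require Import Defs.
From Stdlib Require Import Reals Factorial.
From Coquelicot Require Import Coquelicot.
From Stdlib Require Import Lra Lia FunctionalExtensionality.
Open Scope R_scope.

Lemma Cexp_add (z w : C) : Cexp (z + w)%C = (Cexp z * Cexp w)%C.
Proof.
  destruct z as [a b], w as [c d]; unfold Cexp, Cmult, Cplus; simpl.
  rewrite exp_plus, cos_plus, sin_plus. f_equal; ring.
Qed.

Lemma Cexp_R (r : R) : Cexp (RtoC r) = RtoC (exp r).
Proof.
  unfold Cexp, RtoC; simpl. rewrite cos_0, sin_0. f_equal; ring.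
Qed.

Lemma Cexp_0 : Cexp 0%C = 1%C.
Proof. unfold Cexp; simpl. rewrite exp_0, cos_0, sin_0. unfold RtoC. f_equal; ring. Qed.

Lemma Cexp_opp (z : C) : (Cexp (- z) * Cexp z)%C = 1%C.
Proof. rewrite <- Cexp_add. replace (-z + z)%C with (RtoC 0) by (destruct z; unfold RtoC, Cplus, Copp; simpl; f_equal; ring). apply Cexp_0. Qed.

Lemma Cexp_neq0 (z : C) : Cexp z <> 0%C.
Proof.
  intro H. pose proof (Cexp_opp z) as E. rewrite H in E.
  rewrite Cmult_0_r in E. injection E. lra.
Qed.

Lemma Cmod_Cexp (z : C) : Cmod (Cexp z) = exp (Re z).
Proof.
  destruct z as [a b]; unfold Cmod, Cexp; simpl.
  replace ((exp a * cos b) * ((exp a * cos b) * 1) + (exp a * sin b) * ((exp a * sin b) * 1))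
    with (exp a * exp a * ((cos b)^2 + (sin b)^2)) by ring.
  rewrite Rplus_comm. replace ((sin b)^2 + (cos b)^2) with 1.
  rewrite Rmult_1_r. rewrite sqrt_square; auto. left; apply exp_pos.
  rewrite <- (sin2_cos2 b). unfold Rsqr. ring.
Qed.

Lemma Rcpow_add (t : R) (z w : C) : Rcpow t (z + w)%C = (Rcpow t z * Rcpow t w)%C.
Proof. unfold Rcpow. rewrite <- Cexp_add. f_equal. ring. Qed.

Lemma Rcpow_mul (s t : R) (z : C) : 0 < s -> 0 < t ->
  Rcpow (s * t) z = (Rcpow s z * Rcpow t z)%C.
Proof.
  intros hs ht. unfold Rcpow. rewrite <- Cexp_add. f_equal.
  rewrite ln_mult by auto. rewrite RtoC_plus. ring.
Qed.

Lemma Rcpow_nat (t : R) (n : nat) : 0 < t -> Rcpow t (RtoC (INR n)) = RtoC (t ^ n).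
Proof.
  intros ht. unfold Rcpow. rewrite <- RtoC_mult, Cexp_R.
  f_equal. rewrite <- (exp_ln t) at 2 by auto.
  induction n. simpl. rewrite Rmult_0_l. apply exp_0.
  rewrite S_INR. simpl. rewrite <- IHn, <- exp_plus. f_equal. ring.
Qed.

Lemma Rcpow_neq0 t z : Rcpow t z <> 0%C.
Proof. apply Cexp_neq0. Qed.

Lemma RtoC_neq0 (r : R) : r <> 0 -> RtoC r <> 0%C.
Proof. intros H E. apply H. injection E. auto. Qed.

Lemma between0 (p c : R) : Rmin 0 p <= c <= Rmax 0 p -> Rabs c <= Rabs p.
Proof.
  unfold Rmin, Rmax; destruct (Rle_dec 0 p); intros [h1 h2];
  unfold Rabs; repeat destruct Rcase_abs; lra.
Qed.

Lemma exp_m1 (p : R) : Rabs (exp p - 1) <= Rabs p * exp (Rabs p).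
Proof.
  destruct (MVT_abs exp exp 0 p) as [c [E Hc]].
  { intros; apply derivable_pt_lim_exp. }
  rewrite exp_0 in E. rewrite E, Rminus_0_r.
  rewrite Rabs_right by (left; apply exp_pos).
  rewrite Rmult_comm. apply Rmult_le_compat_l. apply Rabs_pos.
  destruct (Rle_lt_or_eq_dec _ _ (Rle_trans _ _ _ (Rle_abs c) (between0 p c Hc))) as [h|h].
  left; apply exp_increasing; auto. rewrite h; right; auto.
Qed.

Lemma exp_m1p (p : R) : Rabs (exp p - 1 - p) <= p ^ 2 * exp (Rabs p).
Proof.
  destruct (MVT_abs (fun x => exp x - x) (fun x => exp x - 1) 0 p) as [c [E Hc]].
  { intros. apply (derivable_pt_lim_minus exp id). apply derivable_pt_lim_exp. apply derivable_pt_lim_id. }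
  rewrite exp_0 in E. replace (exp p - 1 - p) with (exp p - p - (1 - 0)) by ring.
  rewrite E, Rminus_0_r. pose proof (between0 p c Hc) as Hcp.
  apply Rle_trans with (Rabs c * exp (Rabs c) * Rabs p).
  apply Rmult_le_compat_r. apply Rabs_pos. apply exp_m1.
  replace (p^2) with (Rabs p * Rabs p) by (rewrite <- Rabs_mult; simpl; rewrite Rmult_1_r; apply Rabs_right; nra).
  assert (exp (Rabs c) <= exp (Rabs p)).
  { destruct (Rle_lt_or_eq_dec _ _ Hcp) as [h|h]. left; apply exp_increasing; auto. rewrite h; lra. }
  pose proof (Rabs_pos c). pose proof (exp_pos (Rabs c)). pose proof (Rabs_pos p).
  apply Rle_trans with (Rabs p * exp (Rabs p) * Rabs p).
  apply Rmult_le_compat_r; auto. apply Rmult_le_compat; auto; lra.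
  lra.
Qed.

Lemma sin_abs_le (q : R) : Rabs (sin q) <= Rabs q.
Proof.
  destruct (MVT_abs sin cos 0 q) as [c [E Hc]].
  { intros; apply derivable_pt_lim_sin. }
  rewrite sin_0, Rminus_0_r, Rminus_0_r in E. rewrite E.
  pose proof (COS_bound c). pose proof (Rabs_pos q).
  assert (Rabs (cos c) <= 1) by (unfold Rabs; destruct Rcase_abs; lra). nra.
Qed.

Lemma cos_m1 (q : R) : Rabs (cos q - 1) <= q ^ 2.
Proof.
  destruct (MVT_abs cos (fun x => - sin x) 0 q) as [c [E Hc]].
  { intros; apply derivable_pt_lim_cos. }
  rewrite cos_0, Rminus_0_r in E. rewrite E, Rabs_Ropp.
  pose proof (sin_abs_le c). pose proof (between0 q c Hc).
  replace (q^2) with (Rabs q * Rabs q) by (rewrite <- Rabs_mult; simpl; rewrite Rmult_1_r; apply Rabs_right; nra).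
  pose proof (Rabs_pos q). pose proof (Rabs_pos (sin c)). nra.
Qed.

Lemma sin_mq (q : R) : Rabs (sin q - q) <= Rabs q ^ 3.
Proof.
  destruct (MVT_abs (fun x => sin x - x) (fun x => cos x - 1) 0 q) as [c [E Hc]].
  { intros. apply (derivable_pt_lim_minus sin id). apply derivable_pt_lim_sin. apply derivable_pt_lim_id. }
  rewrite sin_0, !Rminus_0_r in E. rewrite E.
  pose proof (cos_m1 c). pose proof (between0 q c Hc).
  pose proof (Rabs_pos q). pose proof (Rabs_pos c).
  assert (c^2 <= Rabs q ^2).
  { replace (c^2) with (Rabs c * Rabs c) by (rewrite <- Rabs_mult; simpl; rewrite Rmult_1_r; apply Rabs_right; nra). nra. }
  pose proof (Rabs_pos (cos c - 1)). simpl in *. nra.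
Qed.

Lemma Cmod_le_sum (z : C) : Cmod z <= Rabs (Re z) + Rabs (Im z).
Proof.
  destruct z as [a b]. unfold Cmod, Re, Im; simpl.
  rewrite <- (sqrt_pow2 (Rabs a + Rabs b)) by (pose proof (Rabs_pos a); pose proof (Rabs_pos b); lra).
  apply sqrt_le_1_alt. pose proof (Rabs_pos a); pose proof (Rabs_pos b).
  replace (a * (a * 1)) with (Rabs a * Rabs a) by (rewrite <- Rabs_mult; rewrite Rabs_right; nra).
  replace (b * (b * 1)) with (Rabs b * Rabs b) by (rewrite <- Rabs_mult; rewrite Rabs_right; nra).
  simpl. nra.
Qed.

Definition Phi (r : R) := 2 * exp r + 1 + 2 * r.

Lemma Cexp_taylor (z : C) :
  Cmod (Cexp z - 1 - z)%C <= Cmod z ^ 2 * Phi (Cmod z).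
Proof.
  destruct z as [p q].
  set (r := Cmod (p, q)).
  assert (hp : Rabs p <= r) by (apply (re_le_Cmod (p,q))).
  assert (hq : Rabs q <= r) by (pose proof (Rmax_Cmod (p,q)) as HH; simpl in HH; eapply Rle_trans; [apply Rmax_r|apply HH]).
  eapply Rle_trans. apply Cmod_le_sum. unfold Cexp, Re, Im; simpl.
  replace (exp p * cos q - 1 - p) with ((exp p - 1 - p) * cos q + (1 + p) * (cos q - 1)) by ring.
  replace (exp p * sin q - 0 - q) with ((exp p - 1) * sin q + (sin q - q)) by ring.
  pose proof (exp_m1p p) as H1. pose proof (cos_m1 q) as H2. pose proof (exp_m1 p) as H3.
  pose proof (sin_abs_le q) as H4. pose proof (sin_mq q) as H5.
  assert (Rabs (cos q) <= 1) by (pose proof (COS_bound q); unfold Rabs; destruct Rcase_abs; lra).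
  assert (exp (Rabs p) <= exp r).
  { destruct (Rle_lt_or_eq_dec _ _ hp) as [h|h]. left; apply exp_increasing; auto. rewrite h; lra. }
  pose proof (Rabs_pos p). pose proof (Rabs_pos q). pose proof (exp_pos (Rabs p)).
  assert (Ep : p^2 <= r^2).
  { replace (p^2) with (Rabs p * Rabs p) by (rewrite <- Rabs_mult; simpl; rewrite Rmult_1_r; apply Rabs_right; nra). simpl. nra. }
  assert (Eq : q^2 <= r^2).
  { replace (q^2) with (Rabs q * Rabs q) by (rewrite <- Rabs_mult; simpl; rewrite Rmult_1_r; apply Rabs_right; nra). simpl. nra. }
  assert (A1 : Rabs ((exp p - 1 - p) * cos q + (1 + p) * (cos q - 1)) <= r^2 * exp r + (1 + r) * r^2).
  { eapply Rle_trans. apply Rabs_triang. rewrite !Rabs_mult.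
    assert (Rabs (1 + p) <= 1 + r) by (eapply Rle_trans; [apply Rabs_triang|]; rewrite Rabs_R1; lra).
    pose proof (Rabs_pos (exp p - 1 - p)). pose proof (Rabs_pos (cos q)). pose proof (Rabs_pos (cos q - 1)).
    pose proof (Rabs_pos (1+p)).
    apply Rplus_le_compat.
    apply Rle_trans with (Rabs (exp p - 1 - p) * 1). apply Rmult_le_compat_l; lra. 
    rewrite Rmult_1_r. eapply Rle_trans. apply H1. apply Rmult_le_compat; try lra. apply pow2_ge_0.
    apply Rmult_le_compat; lra. }
  assert (A2 : Rabs ((exp p - 1) * sin q + (sin q - q)) <= r * exp r * r + r ^ 3).
  { eapply Rle_trans. apply Rabs_triang. rewrite !Rabs_mult.
    pose proof (Rabs_pos (exp p - 1)). pose proof (Rabs_pos (sin q)).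
    apply Rplus_le_compat. apply Rmult_le_compat; try lra.
    eapply Rle_trans. apply H3. apply Rmult_le_compat; lra.
    eapply Rle_trans. apply H5. simpl. 
    assert (Rabs q * Rabs q <= r * r) by nra. nra. }
  unfold Phi. assert (0 <= r) by apply Cmod_ge_0. pose proof (exp_pos r).
  apply Rle_trans with (r^2 * exp r + (1 + r) * r^2 + (r * exp r * r + r ^ 3)); [|simpl; nra].
  apply Rplus_le_compat.
  - eapply Rle_trans; [|apply A1]. right. f_equal. ring.
  - eapply Rle_trans; [|apply A2]. right. f_equal. ring.
Qed.

Definition Clim (u : nat -> C) (l : C) := filterlim u eventually (locally l).

Lemma Clim_const (l : C) : Clim (fun _ => l) l.
Proof. apply filterlim_const. Qed.

Lemma Clim_plus u v a b : Clim u a -> Clim v b -> Clim (fun n => u n + v n)%C (a + b)%C.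
Proof.
  intros Hu Hv. unfold Clim.
  apply (filterlim_comp_2 u v (fun x y : C => plus x y) Hu Hv). apply (@filterlim_plus C_AbsRing C_NormedModule).
Qed.

Lemma Clim_ext_loc u v l : eventually (fun n => u n = v n) -> Clim u l -> Clim v l.
Proof. intros H Hu. apply (filterlim_ext_loc u v); auto. Qed.

Lemma Clim_ext u v l : (forall n, u n = v n) -> Clim u l -> Clim v l.
Proof. intros H Hu. apply (filterlim_ext u v); auto. Qed.

Lemma Clim_unique u a b : Clim u a -> Clim u b -> a = b.
Proof. intros; eapply (@filterlim_locally_unique nat C_AbsRing C_NormedModule); eauto. apply Proper_StrongProper, eventually_filter. Qed.

Lemma Clim_spec u l : Clim u l <-> forall eps : posreal, eventually (fun n => Cmod (u n - l)%C < eps).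
Proof.
  unfold Clim. rewrite (@filterlim_locally_ball_norm C_AbsRing). reflexivity. apply eventually_filter.
Qed.

Lemma Clim_norm u l : Clim u l <-> is_lim_seq (fun n => Cmod (u n - l)%C) 0.
Proof.
  rewrite Clim_spec, <- is_lim_seq_spec. unfold is_lim_seq'. split; intros H eps; destruct (H eps) as [N HN];
  exists N; intros n hn; specialize (HN n hn).
  rewrite Rminus_0_r, Rabs_right; auto. apply Rle_ge, Cmod_ge_0.
  rewrite Rminus_0_r, Rabs_right in HN; auto. apply Rle_ge, Cmod_ge_0.
Qed.

Lemma Clim_mult u v a b : Clim u a -> Clim v b -> Clim (fun n => u n * v n)%C (a * b)%C.
Proof.
  intros Hu Hv. rewrite Clim_norm in *.
  apply is_lim_seq_le_le with (fun _ => 0) (fun n => Cmod (u n - a)%C * Cmod (v n - b)%C + Cmod a * Cmod (v n - b)%C + Cmod b * Cmod (u n - a)%C).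
  - intros n. split. apply Cmod_ge_0.
    replace (u n * v n - a * b)%C with ((u n - a) * (v n - b) + a * (v n - b) + b * (u n - a))%C by ring.
    eapply Rle_trans. apply Cmod_triangle. rewrite !Cmod_mult. apply Rplus_le_compat_r.
    eapply Rle_trans. apply Cmod_triangle. rewrite !Cmod_mult. lra.
  - apply is_lim_seq_const.
  - replace (Finite 0) with (Finite (0 * 0 + Cmod a * 0 + Cmod b * 0)) by (f_equal; ring).
    apply is_lim_seq_plus'. apply is_lim_seq_plus'. apply is_lim_seq_mult'; auto.
    apply is_lim_seq_mult'; [apply is_lim_seq_const|auto]. apply is_lim_seq_mult'; [apply is_lim_seq_const|auto].
Qed.

Lemma Clim_shift u l : Clim (fun n => u (S n)) l -> Clim u l.
Proof.
  rewrite !Clim_spec. intros H eps. destruct (H eps) as [N HN]. exists (S N).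
  intros n hn. destruct n. lia. apply HN. lia.
Qed.

Lemma Clim_shift_inv u l : Clim u l -> Clim (fun n => u (S n)) l.
Proof.
  rewrite !Clim_spec. intros H eps. destruct (H eps) as [N HN]. exists N.
  intros n hn. apply HN. lia.
Qed.

Lemma Clim_bound u l (b : nat -> R) : (forall n, Cmod (u n - l)%C <= b n) -> is_lim_seq b 0 -> Clim u l.
Proof.
  intros Hb Hl. rewrite Clim_spec. intros eps. apply is_lim_seq_spec in Hl.
  destruct (Hl eps) as [N HN]. exists N. intros n hn. specialize (HN n hn).
  rewrite Rminus_0_r in HN. eapply Rle_lt_trans. apply Hb. eapply Rle_lt_trans. apply Rle_abs. auto.
Qed.

Lemma Clim_Re u l : Clim u l -> is_lim_seq (fun n => Re (u n)) (Re l).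
Proof.
  rewrite Clim_spec. intros H. apply is_lim_seq_spec. intros eps. destruct (H eps) as [N HN].
  exists N. intros n hn. eapply Rle_lt_trans; [|apply (HN n hn)].
  eapply Rle_trans; [|apply (re_le_Cmod (u n - l)%C)]. right. reflexivity.
Qed.

Lemma Clim_Im u l : Clim u l -> is_lim_seq (fun n => Im (u n)) (Im l).
Proof.
  rewrite Clim_spec. intros H. apply is_lim_seq_spec. intros eps. destruct (H eps) as [N HN].
  exists N. intros n hn. eapply Rle_lt_trans; [|apply (HN n hn)].
  pose proof (Rmax_Cmod (u n - l)%C) as HH. eapply Rle_trans; [|apply HH].
  eapply Rle_trans; [|apply Rmax_r]. right. reflexivity.
Qed.

Lemma Clim_seq_eq u l : Clim u l -> Clim_seq u = l.
Proof.
  intros H. unfold Clim_seq. rewrite (is_lim_seq_unique _ _ (Clim_Re u l H)).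
  rewrite (is_lim_seq_unique _ _ (Clim_Im u l H)). destruct l; reflexivity.
Qed.

Lemma CSeries_eq a l : is_series a l -> CSeries a = l.
Proof. intros H. unfold CSeries. apply Clim_seq_eq. exact H. Qed.

Lemma psum_le (a : nat -> R) n : (forall k, 0 <= a k) -> ex_series a -> sum_n a n <= Series a.
Proof.
  intros Hp He. pose proof (Series_correct _ He) as Hs.
  assert (is_lim_seq (sum_n a) (Series a)) by exact Hs.
  apply (is_lim_seq_incr_n _ n) in H.
  assert (Rbar_le (sum_n a n) (Series a)).
  { apply (is_lim_seq_le (fun _ => sum_n a n) (fun k => sum_n a (k + n))). 
    intros k. induction k. simpl. right; auto.
    simpl. rewrite sum_Sn. specialize (Hp (S (k+n))). unfold plus; simpl. lra.
    apply is_lim_seq_const. auto. }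
  simpl in H0. auto.
Qed.

Lemma prod_conv (v e : nat -> C) :
  (forall n, v (S n) = (v n * (1 + e n))%C) -> ex_series (fun n => Cmod (e n)) ->
  exists l, Clim v l.
Proof.
  intros Hv He.
  set (S0 := Series (fun n => Cmod (e n))).
  set (M := Cmod (v 0%nat) * exp S0).
  assert (Hstep : forall n, Cmod (v (S n)) <= Cmod (v n) * exp (Cmod (e n))).
  { intros n. rewrite Hv, Cmod_mult. apply Rmult_le_compat_l. apply Cmod_ge_0.
    eapply Rle_trans. apply Cmod_triangle. rewrite Cmod_1. apply exp_ineq1_le. }
  assert (HB : forall n, Cmod (v (S n)) <= Cmod (v 0%nat) * exp (sum_n (fun k => Cmod (e k)) n)).
  { intros n. induction n.
    - rewrite sum_O. apply Hstep.
    - eapply Rle_trans. apply Hstep. rewrite sum_Sn. unfold plus; simpl. rewrite exp_plus.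
      pose proof (exp_pos (Cmod (e (S n)))).
      rewrite <- Rmult_assoc. apply Rmult_le_compat_r; lra. }
  assert (HM : forall n, Cmod (v n) <= M).
  { intros n. unfold M. assert (1 <= exp S0).
    { assert (0 <= S0). { unfold S0. pose proof (psum_le (fun k => Cmod (e k)) 0 (fun k => Cmod_ge_0 _) He).
      rewrite sum_O in H. pose proof (Cmod_ge_0 (e 0%nat)). lra. }
      rewrite <- exp_0. destruct (Rle_lt_or_eq_dec 0 S0); [lra| left; apply exp_increasing; auto | rewrite <- e0; lra]. }
    destruct n. pose proof (Cmod_ge_0 (v 0%nat)); nra.
    eapply Rle_trans. apply HB. apply Rmult_le_compat_l. apply Cmod_ge_0.
    destruct (Rle_lt_or_eq_dec _ _ (psum_le (fun k => Cmod (e k)) n (fun k => Cmod_ge_0 _) He)).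
    left; apply exp_increasing; auto. right; rewrite e0; reflexivity. }
  set (d := fun n => (v (S n) - v n)%C).
  assert (Hd : ex_series d).
  { apply (@ex_series_le C_AbsRing C_CompleteNormedModule d (fun n => M * Cmod (e n))).
    intros n. change (norm (d n)) with (Cmod (d n)). unfold d. rewrite Hv.
    replace (v n * (1 + e n) - v n)%C with (v n * e n)%C by ring. rewrite Cmod_mult.
    apply Rmult_le_compat_r. apply Cmod_ge_0. auto.
    apply (@ex_series_scal_l R_AbsRing R_NormedModule M (fun n => Cmod (e n))). auto. }
  destruct Hd as [ld Hld].
  exists (v 0%nat + ld)%C. apply Clim_shift.
  assert (Clim (fun n => v 0%nat + sum_n d n)%C (v 0%nat + ld)%C).
  { apply Clim_plus. apply Clim_const. exact Hld. }
  eapply Clim_ext; [|exact H]. intros n. simpl. induction n.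
  - rewrite sum_O. unfold d. ring.
  - rewrite sum_Sn. unfold plus; simpl. 
    transitivity (v 0%nat + sum_n d n + d (S n))%C. ring. rewrite IHn. unfold d. ring.
Qed.

Lemma ln_le_m1 y : 0 < y -> ln y <= y - 1.
Proof. intros hy. pose proof (exp_ineq1_le (ln y)). rewrite exp_ln in H; lra. Qed.

Definition Lg (n : nat) := ln (INR (S n)) - ln (INR n).

Lemma Lg_bounds n : (1 <= n)%nat -> / INR (S n) <= Lg n <= / INR n.
Proof.
  intros hn. unfold Lg. assert (h0 : 0 < INR n) by (apply lt_0_INR; lia).
  assert (h1 : 0 < INR (S n)) by (apply lt_0_INR; lia).
  rewrite S_INR in *. split.
  - pose proof (ln_le_m1 (INR n / (INR n + 1))) as H.
    rewrite ln_div in H by lra.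
    assert (INR n / (INR n + 1) - 1 = - / (INR n + 1)) by (field; lra).
    assert (0 < INR n / (INR n + 1)) by (apply Rdiv_lt_0_compat; lra). lra.
  - pose proof (ln_le_m1 ((INR n + 1) / INR n)) as H.
    rewrite ln_div in H by lra.
    assert ((INR n + 1) / INR n - 1 = / INR n) by (field; lra).
    assert (0 < (INR n + 1) / INR n) by (apply Rdiv_lt_0_compat; lra). lra.
Qed.

Lemma Phi_mono a b : 0 <= a <= b -> Phi a <= Phi b.
Proof.
  intros [h1 h2]. unfold Phi. destruct (Rle_lt_or_eq_dec _ _ h2).
  pose proof (exp_increasing a b r). lra. subst; lra.
Qed.

Lemma Phi_pos a : 0 <= a -> 0 <= Phi a.
Proof. intros. unfold Phi. pose proof (exp_pos a). lra. Qed.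

Definition eg (z : C) (n : nat) : C :=
  ((z + RtoC (INR (S n))) * RtoC (/ INR (S n)) * Cexp (- (z * RtoC (Lg n))) - 1)%C.

Definition Kz (z : C) := Cmod z + Cmod z ^ 2 * Phi (Cmod z) + Cmod z ^ 2 + Cmod z ^ 3 * Phi (Cmod z).

Lemma eg_bound z n : (1 <= n)%nat -> Cmod (eg z n) <= Kz z * (/ INR n) ^ 2.
Proof.
  intros hn. assert (h0 : 0 < INR n) by (apply lt_0_INR; lia).
  assert (h1 : 0 < INR (S n)) by (apply lt_0_INR; lia).
  pose proof (Lg_bounds n hn) as [HL1 HL2].
  set (L := Lg n) in *. set (t := / INR n). set (s := / INR (S n)).
  change (/ INR (S n)) with s in HL1. change (/ INR n) with t in HL2.
  assert (ht : 0 < t <= 1). { unfold t. split. apply Rinv_0_lt_compat; auto.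
    rewrite <- Rinv_1. apply Rinv_le_contravar. lra. apply (le_INR 1); auto. }
  assert (hs : 0 < s <= t). { unfold s, t. split. apply Rinv_0_lt_compat; auto.
    apply Rinv_le_contravar; auto. rewrite S_INR; lra. }
  assert (hst : t - s <= t ^ 2).
  { unfold s, t. rewrite S_INR. replace (/ INR n - / (INR n + 1)) with (/ INR n * / (INR n + 1)) by (field; lra).
    simpl. rewrite Rmult_1_r. apply Rmult_le_compat_l. left; apply Rinv_0_lt_compat; auto.
    apply Rinv_le_contravar; auto. lra. }
  set (zeta := (- (z * RtoC L))%C).
  set (Rm := (Cexp zeta - 1 - zeta)%C).
  set (alpha := (z * RtoC s)%C).
  assert (E : eg z n = ((z * RtoC (s - L)) + Rm + alpha * (zeta + Rm))%C).
  { unfold eg. fold L. fold zeta. unfold Rm, alpha.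
    replace ((z + RtoC (INR (S n))) * RtoC (/ INR (S n)))%C with (1 + z * RtoC s)%C.
    rewrite RtoC_minus. unfold zeta. ring.
    unfold s. rewrite <- (Rinv_r (INR (S n))) by lra. rewrite RtoC_mult. ring. }
  rewrite E.
  set (m := Cmod z). assert (hm : 0 <= m) by apply Cmod_ge_0.
  assert (Hz : Cmod zeta <= m * t).
  { unfold zeta. rewrite Cmod_opp, Cmod_mult, Cmod_R. apply Rmult_le_compat_l; auto.
    rewrite Rabs_right; lra. }
  assert (Hz' : Cmod zeta <= m) by nra.
  assert (HR : Cmod Rm <= m^2 * Phi m * t^2).
  { unfold Rm. eapply Rle_trans. apply Cexp_taylor.
    pose proof (Cmod_ge_0 zeta). pose proof (Phi_mono _ _ (conj H Hz')).
    pose proof (Phi_pos _ H).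
    assert (Cmod zeta ^2 <= (m*t)^2) by (simpl; nra).
    replace (m^2 * Phi m * t^2) with ((m*t)^2 * Phi m) by ring.
    apply Rmult_le_compat; auto. apply pow2_ge_0. }
  assert (Ha : Cmod alpha <= m * t).
  { unfold alpha. rewrite Cmod_mult, Cmod_R. apply Rmult_le_compat_l; auto. rewrite Rabs_right; lra. }
  assert (H1 : Cmod (z * RtoC (s - L)) <= m * t^2).
  { rewrite Cmod_mult, Cmod_R. apply Rmult_le_compat_l; auto.
    rewrite Rabs_left1 by lra. lra. }
  pose proof (Phi_pos m hm) as HP.
  eapply Rle_trans. apply Cmod_triangle. eapply Rle_trans. apply Rplus_le_compat_r. apply Cmod_triangle.
  rewrite Cmod_mult.
  assert (Cmod (zeta + Rm) <= m * t + m^2 * Phi m * t^2).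
  { eapply Rle_trans. apply Cmod_triangle. lra. }
  assert (Cmod alpha * Cmod (zeta + Rm) <= m * t * (m * t + m ^ 2 * Phi m * t ^ 2)).
  { apply Rmult_le_compat; auto; apply Cmod_ge_0. }
  unfold Kz. fold m. fold t.
  assert (m * t * (m * t + m ^ 2 * Phi m * t ^ 2) <= (m^2 + m^3 * Phi m) * t^2).
  { assert (0 <= m^3 * Phi m * t^2 * (1 - t)).
    { apply Rmult_le_pos. repeat apply Rmult_le_pos; try lra; apply pow_le; lra. lra. }
    simpl in *. nra. }
  rewrite Cmod_mult in H1; fold m in H1. rewrite Cmod_mult. lra.
Qed.

Definition gs (z : C) (n : nat) : C :=
  Cdiv (rising_prod z n) (Cmult (RtoC (INR (fact n))) (Rcpow (INR n) z)).

Lemma INR_fact_neq0 n : INR (fact n) <> 0.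
Proof. apply not_0_INR, fact_neq_0. Qed.

Lemma gs_rec z n : (1 <= n)%nat -> gs z (S n) = (gs z n * (1 + eg z n))%C.
Proof.
  intros hn. unfold gs, eg. change (rising_prod z (S n)) with (rising_prod z n * (z + RtoC (INR (S n))))%C.
  assert (h0 : 0 < INR n) by (apply lt_0_INR; lia).
  assert (h1 : 0 < INR (S n)) by (apply lt_0_INR; lia).
  assert (EP : Rcpow (INR (S n)) z = (Rcpow (INR n) z * Cexp (z * RtoC (Lg n)))%C).
  { unfold Rcpow. rewrite <- Cexp_add. f_equal. unfold Lg. rewrite RtoC_minus. ring. }
  assert (EF : INR (fact (S n)) = INR (S n) * INR (fact n)) by (rewrite fact_simpl, mult_INR; auto).
  rewrite EP, EF, RtoC_mult.
  assert (EE : (Cexp (- (z * RtoC (Lg n))) = / Cexp (z * RtoC (Lg n)))%C).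
  { pose proof (Cexp_opp (z * RtoC (Lg n))) as H.
    pose proof (Cexp_neq0 (z * RtoC (Lg n))).
    transitivity (Cexp (- (z * RtoC (Lg n))) * Cexp (z * RtoC (Lg n)) * / Cexp (z * RtoC (Lg n)))%C.
    field; auto. rewrite H. ring. }
  rewrite EE.
  assert (RtoC (/ INR (S n)) = / RtoC (INR (S n)))%C by (rewrite RtoC_inv; auto; lra).
  rewrite H.
  pose proof (Cexp_neq0 (z * RtoC (Lg n))). pose proof (Rcpow_neq0 (INR n) z).
  pose proof (RtoC_neq0 _ (INR_fact_neq0 n)). assert (RtoC (INR (S n)) <> 0%C) by (apply RtoC_neq0; lra).
  unfold Cdiv. field. repeat split; auto.
Qed.

Lemma is_lim_inv_S : is_lim_seq (fun n => / INR (S n)) 0.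
Proof.
  replace (Finite 0) with (Rbar_inv p_infty) by reflexivity.
  apply is_lim_seq_inv. apply (is_lim_seq_incr_1 INR p_infty). apply is_lim_seq_INR. discriminate.
Qed.

Lemma ex_series_invsq : ex_series (fun n => (/ INR (S n)) ^ 2).
Proof.
  apply (@ex_series_le R_AbsRing R_CompleteNormedModule _ (fun n => 2 * (/ INR (S n) - / INR (S (S n))))).
  - intros n. change (norm ((/ INR (S n)) ^ 2)) with (Rabs ((/ INR (S n)) ^ 2)).
    assert (h1 : 0 < INR (S n)) by (apply lt_0_INR; lia).
    rewrite Rabs_right by (apply Rle_ge, pow2_ge_0).
    rewrite (S_INR (S n)). set (a := INR (S n)) in *.
    assert (ha : 1 <= a) by (unfold a; rewrite S_INR; pose proof (pos_INR n); lra).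
    cut (0 <= 2 * (/ a - / (a + 1)) - (/ a) ^ 2). lra.
    replace (2 * (/ a - / (a + 1)) - (/ a) ^ 2) with ((a - 1) / (a * a * (a + 1))) by (field; lra).
    apply Rdiv_le_0_compat. lra. assert (0 < a * a) by nra. nra.
  - apply (@ex_series_scal_l R_AbsRing R_NormedModule 2).
    exists 1. unfold is_series. 
    assert (forall n, sum_n (fun n => / INR (S n) - / INR (S (S n))) n = 1 - / INR (S (S n))).
    { induction n. rewrite sum_O. simpl. lra. rewrite sum_Sn, IHn. unfold plus; simpl. ring. }
    apply (filterlim_ext (fun n => 1 - / INR (S (S n)))). intros; auto.
    assert (HH : is_lim_seq (fun n => 1 - / INR (S (S n))) (1 - 0)).
    { apply (is_lim_seq_minus' (fun _ => 1) (fun n => / INR (S (S n)))). apply is_lim_seq_const.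
      apply (is_lim_seq_incr_1 (fun n => / INR (S n))). apply is_lim_inv_S. }
    rewrite Rminus_0_r in HH. exact HH.
Qed.

Lemma gs_conv z : exists l, Clim (gs z) l.
Proof.
  destruct (prod_conv (fun n => gs z (S n)) (fun n => eg z (S n))) as [l Hl].
  - intros n. apply gs_rec. lia.
  - apply (@ex_series_le R_AbsRing R_CompleteNormedModule _ (fun n => Kz z * (/ INR (S n)) ^ 2)).
    intros n. change (norm (Cmod (eg z (S n)))) with (Rabs (Cmod (eg z (S n)))).
    rewrite Rabs_right by (apply Rle_ge, Cmod_ge_0). apply eg_bound. lia.
    apply (@ex_series_scal_l R_AbsRing R_NormedModule). apply ex_series_invsq.
  - exists l. apply Clim_shift. auto.
Qed.

Lemma rgamma_lim z : Clim (gs z) (rgamma z).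
Proof.
  destruct (gs_conv z) as [l Hl]. unfold rgamma. fold (gs z).
  rewrite (Clim_seq_eq _ _ Hl). auto.
Qed.

Lemma rising_shift z n : (z * rising_prod (z + 1) n = rising_prod z n * (z + 1 + RtoC (INR n)))%C.
Proof.
  induction n.
  - change (z * (z + 1) = z * (z + 1 + RtoC (INR 0)))%C. rewrite INR_0. ring.
  - change (z * (rising_prod (z + 1) n * (z + 1 + RtoC (INR (S n)))) =
      rising_prod z n * (z + RtoC (INR (S n))) * (z + 1 + RtoC (INR (S n))))%C.
    rewrite Cmult_assoc, IHn. rewrite S_INR, RtoC_plus. ring.
Qed.

Lemma Clim_inv_n : Clim (fun n => RtoC (/ INR n)) 0%C.
Proof.
  apply Clim_shift. apply (Clim_bound _ _ (fun n => / INR (S n))).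
  intros n. replace (RtoC (/ INR (S n)) - 0)%C with (RtoC (/ INR (S n))) by ring.
  rewrite Cmod_R. rewrite Rabs_right. lra. left; apply Rinv_0_lt_compat, lt_0_INR; lia.
  apply is_lim_inv_S.
Qed.

Lemma rgamma_rec z : rgamma z = (z * rgamma (z + 1))%C.
Proof.
  apply (Clim_unique (fun n => gs z n * (1 + (z + 1) * RtoC (/ INR n)))%C).
  - assert (HH : Clim (fun n => gs z n * (1 + (z + 1) * RtoC (/ INR n)))%C (rgamma z * (1 + (z + 1) * 0))%C).
    { apply Clim_mult. apply rgamma_lim. apply Clim_plus. apply Clim_const.
      apply Clim_mult. apply Clim_const. apply Clim_inv_n. }
    replace (rgamma z * (1 + (z + 1) * 0))%C with (rgamma z) in HH by ring. exact HH.
  - apply (Clim_ext_loc (fun n => z * gs (z + 1) n)%C).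
    exists 1%nat. intros n hn. unfold gs.
    assert (h0 : 0 < INR n) by (apply lt_0_INR; lia).
    rewrite Rcpow_add. change (Rcpow (INR n) (RtoC 1)) with (Rcpow (INR n) (RtoC (INR 1))).
    rewrite Rcpow_nat by auto. simpl pow. rewrite Rmult_1_r.
    unfold Cdiv. rewrite Cmult_assoc, rising_shift.
    pose proof (Rcpow_neq0 (INR n) z).
    pose proof (RtoC_neq0 _ (INR_fact_neq0 n)). assert (RtoC (INR n) <> 0%C) by (apply RtoC_neq0; lra).
    rewrite RtoC_inv by lra. field. auto.
    apply Clim_mult. apply Clim_const. apply rgamma_lim.
Qed.

Fixpoint fsum (f : nat -> C) (n : nat) : C :=
  match n with O => 0%C | S n' => (fsum f n' + f n')%C end.

Lemma fsum_ext (f g : nat -> C) n : (forall i, (i < n)%nat -> f i = g i) -> fsum f n = fsum g n.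
Proof. induction n; intros H; simpl; auto. rewrite IHn, H; auto. Qed.

Lemma fsum_plus (f g : nat -> C) n : fsum (fun i => f i + g i)%C n = (fsum f n + fsum g n)%C.
Proof. induction n; simpl. ring. rewrite IHn. ring. Qed.

Lemma fsum_scal_l (c : C) (f : nat -> C) n : fsum (fun i => c * f i)%C n = (c * fsum f n)%C.
Proof. induction n; simpl. ring. rewrite IHn. ring. Qed.

Lemma fsum_zero (f : nat -> C) n : (forall i, (i < n)%nat -> f i = 0%C) -> fsum f n = 0%C.
Proof. induction n; intros H; simpl; auto. rewrite IHn, H; auto. ring. Qed.

Lemma fsum_split (f : nat -> C) a b : fsum f (a + b) = (fsum f a + fsum (fun i => f (a + i)%nat) b)%C.
Proof. induction b; simpl. rewrite Nat.add_0_r. ring. rewrite Nat.add_succ_r. simpl. rewrite IHb. ring. Qed.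

Lemma fsum_swap (f : nat -> nat -> C) n m :
  fsum (fun i => fsum (f i) m) n = fsum (fun j => fsum (fun i => f i j) n) m.
Proof.
  induction n; simpl. symmetry. apply fsum_zero. auto.
  rewrite IHn. rewrite <- fsum_plus. reflexivity.
Qed.

Lemma fsum_last (f : nat -> C) n : fsum f (S n) = (fsum f n + f n)%C.
Proof. reflexivity. Qed.

Lemma fsum_first (f : nat -> C) n : fsum f (S n) = (f 0%nat + fsum (fun i => f (S i)) n)%C.
Proof. replace (S n) with (1 + n)%nat by lia. rewrite fsum_split. simpl. ring. Qed.

Lemma sum_n_fsum (f : nat -> C) n : sum_n f n = fsum f (S n).
Proof. induction n. rewrite sum_O. simpl. ring. rewrite sum_Sn, IHn. reflexivity. Qed.

Lemma Cmod_fsum (f : nat -> C) n : Cmod (fsum f (S n)) <= sum_n (fun i => Cmod (f i)) n.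
Proof.
  induction n.
  - change (fsum f 1) with (0 + f 0%nat)%C. rewrite sum_O. replace (0 + f 0%nat)%C with (f 0%nat) by ring. apply Rle_refl.
  - change (fsum f (S (S n))) with (fsum f (S n) + f (S n))%C.
    eapply Rle_trans. apply Cmod_triangle. rewrite sum_Sn. apply Rplus_le_compat_r. exact IHn.
Qed.

Fixpoint rsum (f : nat -> R) (n : nat) : R :=
  match n with O => 0 | S n' => rsum f n' + f n' end.

Lemma rsum_split f a b : rsum f (a + b) = rsum f a + rsum (fun i => f (a + i)%nat) b.
Proof. induction b; simpl. rewrite Nat.add_0_r. ring. rewrite Nat.add_succ_r. simpl. rewrite IHb. ring. Qed.

Lemma sum_n_rsum (f : nat -> R) n : sum_n f n = rsum f (S n).
Proof. induction n. rewrite sum_O. simpl. ring. rewrite sum_Sn, IHn. reflexivity. Qed.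

Lemma Cmod_fsum_r (f : nat -> C) n : Cmod (fsum f n) <= rsum (fun i => Cmod (f i)) n.
Proof.
  induction n. simpl. rewrite Cmod_0. lra.
  simpl. eapply Rle_trans. apply Cmod_triangle. lra.
Qed.

Lemma rsum_le_const (f : nat -> R) c n : (forall i, (i < n)%nat -> f i <= c) -> rsum f n <= INR n * c.
Proof.
  induction n; intros H. simpl; lra. change (rsum f (S n)) with (rsum f n + f n). rewrite S_INR.
  assert (rsum f n <= INR n * c) by (apply IHn; intros; apply H; lia).
  specialize (H n). assert (f n <= c) by (apply H; lia). lra.
Qed.

Lemma fsum_minus (f g : nat -> C) n : fsum (fun i => f i - g i)%C n = (fsum f n - fsum g n)%C.
Proof. induction n; simpl. ring. rewrite IHn. ring. Qed.

Section Triangle.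
Variable w : nat.
Hypothesis hw : (1 <= w)%nat.
Variable K : nat -> nat -> C.

Definition tt (N i : nat) : C := if (w * i <=? N)%nat then fsum (K i) (S (N - w * i)) else 0%C.
Definition dd (D i : nat) : C := if (w * i <=? D)%nat then K i (D - w * i)%nat else 0%C.

Lemma tt_step N i : tt (S N) i = (tt N i + dd (S N) i)%C.
Proof.
  unfold tt, dd.
  destruct (Nat.leb_spec (w * i) N); destruct (Nat.leb_spec (w * i) (S N)); try lia.
  - replace (S N - w * i)%nat with (S (N - w * i)) by lia. simpl. ring.
  - replace (w * i)%nat with (S N) by lia. rewrite Nat.sub_diag. simpl. ring.
  - ring.
Qed.

Lemma tt_0 i : tt 0 i = dd 0 i.
Proof.
  unfold tt, dd. destruct (Nat.leb_spec (w * i) 0). replace (0 - w * i)%nat with 0%nat by lia. simpl. ring. auto.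
Qed.

Lemma tt_zero N i : (N < i)%nat -> tt N i = 0%C.
Proof.
  intros h. unfold tt. destruct (Nat.leb_spec (w * i) N); auto. nia.
Qed.

Lemma triangle N : fsum (tt N) (S N) = fsum (fun d => fsum (dd d) (S d)) (S N).
Proof.
  induction N.
  - simpl. rewrite tt_0. ring.
  - rewrite (fsum_last (fun d => fsum (dd d) (S d)) (S N)). rewrite <- IHN.
    rewrite (fsum_ext (tt (S N)) (fun i => tt N i + dd (S N) i)%C) by (intros; apply tt_step).
    rewrite fsum_plus. rewrite (fsum_last (tt N) (S N)). rewrite tt_zero by lia. ring.
Qed.
End Triangle.

Lemma Clim_le_norm u l b : Clim u l -> (forall n, Cmod (u n) <= b) -> Cmod l <= b.
Proof.
  intros H Hb. rewrite Clim_spec in H.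
  apply Rnot_lt_le. intros Hlt.
  assert (he : 0 < Cmod l - b) by lra.
  destruct (H (mkposreal _ he)) as [N HN]. specialize (HN N (le_n _)). simpl in HN.
  specialize (Hb N).
  pose proof (Cmod_triangle (u N) (l - u N)%C). replace (u N + (l - u N))%C with l in H0 by ring.
  rewrite <- Cmod_opp in HN. replace (- (u N - l))%C with (l - u N)%C in HN by ring. lra.
Qed.

Lemma eventually_forall_le (P : nat -> nat -> Prop) I :
  (forall i, eventually (P i)) -> eventually (fun N => forall i, (i <= I)%nat -> P i N).
Proof.
  intros H. induction I.
  - destruct (H 0%nat) as [N HN]. exists N. intros n hn i hi. replace i with 0%nat by lia. auto.
  - destruct IHI as [N1 H1]. destruct (H (S I)) as [N2 H2]. exists (max N1 N2).
    intros n hn i hi. destruct (Nat.eq_dec i (S I)). subst. apply H2. lia. apply H1. lia. lia.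
Qed.

Lemma tannery (f : nat -> nat -> C) (F : nat -> C) (M : nat -> R) :
  (forall i, Clim (fun N => f N i) (F i)) -> (forall N i, Cmod (f N i) <= M i) -> ex_series M ->
  (forall N i, (N < i)%nat -> f N i = 0%C) ->
  exists Sm, is_series F Sm /\ Clim (fun N => fsum (f N) (S N)) Sm.
Proof.
  intros Hlim HM HMs Hz.
  assert (HF : forall i, Cmod (F i) <= M i) by (intros i; apply (Clim_le_norm _ _ _ (Hlim i)); auto).
  assert (HFs : ex_series F).
  { apply (@ex_series_le C_AbsRing C_CompleteNormedModule F M); auto. }
  destruct HFs as [Sm HS]. exists Sm. split; auto.
  rewrite Clim_spec. intros eps.
  destruct HMs as [T HT].
  assert (HT' : is_lim_seq (sum_n M) T) by exact HT.
  apply is_lim_seq_spec in HT'.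
  assert (he8 : 0 < eps / 8) by (pose proof (cond_pos eps); lra).
  assert (he4 : 0 < eps / 4) by (pose proof (cond_pos eps); lra).
  destruct (HT' (mkposreal _ he8)) as [I1 HI1]. simpl in HI1.
  assert (HS' : Clim (sum_n F) Sm) by exact HS. rewrite Clim_spec in HS'.
  destruct (HS' (mkposreal _ he4)) as [I2 HI2]. simpl in HI2.
  set (I := max I1 I2).
  assert (hc : 0 < eps / (4 * INR (S I))).
  { apply Rdiv_lt_0_compat. apply cond_pos. pose proof (lt_0_INR (S I) (Nat.lt_0_succ _)). lra. }
  destruct (eventually_forall_le (fun i N => Cmod (f N i - F i)%C < eps / (4 * INR (S I))) I) as [N0 HN0].
  { intros i. pose proof (Hlim i) as Hi. rewrite Clim_spec in Hi. apply (Hi (mkposreal _ hc)). }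
  exists (max N0 I). intros N hN.
  assert (EN : S N = (S I + (N - I))%nat) by lia.
  rewrite EN, fsum_split.
  replace (fsum (f N) (S I) + fsum (fun i => f N (S I + i)%nat) (N - I) - Sm)%C
    with (fsum (fun i => f N i - F i)%C (S I) + fsum (fun i => f N (S I + i)%nat) (N - I) + (fsum F (S I) - Sm))%C
    by (rewrite fsum_minus; ring).
  assert (A1 : Cmod (fsum (fun i => f N i - F i)%C (S I)) <= eps / 4).
  { eapply Rle_trans. apply Cmod_fsum_r. eapply Rle_trans. apply (rsum_le_const _ (eps / (4 * INR (S I)))).
    intros i hi. left. apply HN0. lia. lia. right. field. pose proof (lt_0_INR (S I) (Nat.lt_0_succ _)). lra. }
  assert (A2 : Cmod (fsum (fun i => f N (S I + i)%nat) (N - I)) < eps / 4).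
  { eapply Rle_lt_trans. apply Cmod_fsum_r.
    eapply Rle_lt_trans. 
    apply (Rle_trans _ (rsum (fun i => M (S I + i)%nat) (N - I))).
    { generalize (N - I)%nat as k. intros k; induction k. simpl; lra. pose proof (HM N (S I + k)%nat). simpl in *. lra. }
    apply Rle_refl.
    assert (rsum M (S N) = rsum M (S I) + rsum (fun i => M (S I + i)%nat) (N - I)) by (rewrite EN; apply rsum_split).
    rewrite <- !sum_n_rsum in H.
    pose proof (HI1 N ltac:(lia)). pose proof (HI1 I ltac:(lia)).
    apply Rabs_lt_between' in H0. apply Rabs_lt_between' in H1. lra. }
  assert (A3 : Cmod (fsum F (S I) - Sm)%C < eps / 4).
  { rewrite <- sum_n_fsum. apply HI2. lia. }
  eapply Rle_lt_trans. apply Cmod_triangle. eapply Rle_lt_trans. apply Rplus_le_compat_r. apply Cmod_triangle.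
  pose proof (cond_pos eps). lra.
Qed.

Fixpoint bin (n k : nat) : R :=
  match n, k with
  | _, O => 1
  | O, S _ => 0
  | S n', S k' => bin n' k' + bin n' (S k')
  end.

Lemma bin_gt n k : (n < k)%nat -> bin n k = 0.
Proof.
  revert k; induction n; intros k hk; destruct k; try lia; simpl; auto.
  rewrite !IHn by lia. ring.
Qed.

Lemma bin_0 n : bin n 0 = 1.
Proof. destruct n; reflexivity. Qed.

Lemma fact_S n : INR (fact (S n)) = INR (S n) * INR (fact n).
Proof. rewrite fact_simpl, mult_INR. auto. Qed.

Lemma bin_fact n k : (k <= n)%nat -> bin n k * INR (fact k) * INR (fact (n - k)) = INR (fact n).
Proof.
  revert k; induction n; intros k hk.
  - destruct k; [|lia]. simpl. lra.
  - destruct k. rewrite bin_0. simpl (S n - 0)%nat. simpl (fact 0). simpl INR at 1. ring.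
    simpl bin. destruct (Nat.eq_dec k n).
    + subst. rewrite (bin_gt n (S n)) by lia. rewrite Nat.sub_diag. simpl (fact 0).
      pose proof (IHn n (le_n n)) as E. rewrite Nat.sub_diag in E. simpl (fact 0) in E. simpl INR in E at 2.
      assert (Hb : bin n n = 1). { apply (Rmult_eq_reg_r (INR (fact n))). lra. apply not_0_INR, fact_neq_0. }
      rewrite Hb. simpl INR. ring.
    + assert (hk' : (k < n)%nat) by lia.
      pose proof (IHn k ltac:(lia)) as E1. pose proof (IHn (S k) hk') as E2.
      replace (S n - S k)%nat with (n - k)%nat by lia.
      replace (n - k)%nat with (S (n - S k)) in * by lia.
      rewrite (fact_S k), (fact_S (n - S k)) in *. rewrite (fact_S n).
      replace (INR (S n)) with (INR (S k) + INR (S (n - S k))) by (rewrite <- plus_INR; f_equal; lia).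
      transitivity (INR (S k) * (bin n k * INR (fact k) * (INR (S (n - S k)) * INR (fact (n - S k)))) + INR (S (n - S k)) * (bin n (S k) * (INR (S k) * INR (fact k)) * INR (fact (n - S k)))). ring. rewrite E1, E2. ring.
Qed.

Fixpoint ff (n r : nat) : R :=
  match r with O => 1 | S r' => ff n r' * (INR n - INR r') end.

Lemma ff_fact n r : (r <= n)%nat -> ff n r * INR (fact (n - r)) = INR (fact n).
Proof.
  induction r; intros hr. simpl. rewrite Nat.sub_0_r. ring.
  simpl ff. rewrite <- IHr by lia.
  replace (n - r)%nat with (S (n - S r)) by lia. rewrite fact_S.
  replace (INR (S (n - S r))) with (INR n - INR r) by (rewrite <- minus_INR by lia; f_equal; lia). ring.
Qed.

Lemma ff_zero n r : (n < r)%nat -> ff n r = 0.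
Proof.
  induction r; intros hr. lia. simpl ff. destruct (Nat.eq_dec n r). subst. ring.
  rewrite IHr by lia. ring.
Qed.

Fixpoint rising (w : C) (k : nat) : C :=
  match k with O => 1%C | S k' => (rising w k' * (w + RtoC (INR k')))%C end.

Lemma rising_S_l w k : rising w (S k) = (w * rising (w + 1) k)%C.
Proof.
  induction k. change (1 * (w + RtoC (INR 0)) = w * 1)%C. rewrite INR_0. ring.
  change (rising w (S (S k))) with (rising w (S k) * (w + RtoC (INR (S k))))%C.
  rewrite IHk. change (rising (w + 1) (S k)) with (rising (w + 1) k * (w + 1 + RtoC (INR k)))%C.
  rewrite S_INR, RtoC_plus. ring.
Qed.

Lemma vandermonde m : forall c n,
  rising (c + RtoC (INR n)) m =
  fsum (fun r => RtoC (bin m r * ff n r) * rising (c + RtoC (INR r)) (m - r))%C (S m).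
Proof.
  induction m; intros c n.
  - change (@eq C (rising (c + RtoC (INR n)) 0) (0 + RtoC (bin 0 0 * ff n 0) * rising (c + RtoC (INR 0)) (0 - 0))%C).
    replace (bin 0 0 * ff n 0) with 1 by (simpl; ring). change (rising (c + RtoC (INR 0)) (0 - 0)) with (RtoC 1). change (rising (c + RtoC (INR n)) 0) with (RtoC 1). ring.
  - rewrite rising_S_l. replace (c + RtoC (INR n) + 1)%C with ((c + 1) + RtoC (INR n))%C by ring.
    rewrite IHm. rewrite <- fsum_scal_l.
    (* split c + n = (c + r) + (n - r) *)
    rewrite (fsum_ext _ (fun r => (RtoC (bin m r * ff n r) * rising (c + RtoC (INR r)) (S m - r))
                           + (RtoC (bin m r * ff n (S r)) * rising (c + RtoC (INR (S r))) (m - r)))%C).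
    2:{ intros r hr. replace (S m - r)%nat with (S (m - r)) by lia. rewrite rising_S_l.
        simpl ff. rewrite S_INR, !RtoC_mult, RtoC_minus, RtoC_plus. 
        replace (c + 1 + RtoC (INR r))%C with (c + RtoC (INR r) + 1)%C by ring.
        replace (c + (RtoC (INR r) + RtoC 1))%C with (c + RtoC (INR r) + 1)%C by ring. ring. }
    rewrite fsum_plus.
    rewrite (fsum_first (fun r => RtoC (bin (S m) r * ff n r) * rising (c + RtoC (INR r)) (S m - r))%C).
    rewrite (fsum_ext (fun i => RtoC (bin (S m) (S i) * ff n (S i)) * rising (c + RtoC (INR (S i))) (S m - S i))%C
               (fun i => RtoC (bin m i * ff n (S i)) * rising (c + RtoC (INR (S i))) (m - i)
                       + RtoC (bin m (S i) * ff n (S i)) * rising (c + RtoC (INR (S i))) (S m - S i))%C).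
    2:{ intros i hi. simpl bin. replace (S m - S i)%nat with (m - i)%nat by lia. rewrite !RtoC_mult, RtoC_plus. ring. }
    rewrite fsum_plus.
    replace (fsum (fun r => RtoC (bin m r * ff n r) * rising (c + RtoC (INR r)) (S m - r))%C (S m))
      with (fsum (fun r => RtoC (bin m r * ff n r) * rising (c + RtoC (INR r)) (S m - r))%C (S (S m)))
      by (rewrite (fsum_last _ (S m)); rewrite (bin_gt m (S m)) by lia; rewrite Rmult_0_l; ring).
    rewrite fsum_first. rewrite !bin_0. ring.
Qed.

Lemma fact_pos n : 0 < INR (fact n).
Proof. apply lt_0_INR, lt_O_fact. Qed.

Lemma fsum_scal_r (f : nat -> C) (c : C) n : fsum (fun i => f i * c)%C n = (fsum f n * c)%C.
Proof. induction n; simpl. ring. rewrite IHn. ring. Qed.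

Lemma RtoC_fsum (f : nat -> R) n : RtoC (rsum f n) = fsum (fun i => RtoC (f i)) n.
Proof. induction n; simpl. reflexivity. rewrite RtoC_plus, IHn. reflexivity. Qed.

Lemma sum_f_R0_rsum f n : sum_f_R0 f n = rsum f (S n).
Proof. induction n; simpl. ring. rewrite IHn. reflexivity. Qed.

Lemma binom_exp (a b : R) k :
  RtoC ((a + b) ^ k / INR (fact k)) =
  fsum (fun j => RtoC (a ^ j * b ^ (k - j) / (INR (fact j) * INR (fact (k - j))))) (S k).
Proof.
  rewrite binomial. rewrite sum_f_R0_rsum.
  replace (rsum (fun i => Binomial.C k i * a ^ i * b ^ (k - i)) (S k) / INR (fact k))
    with (rsum (fun i => a ^ i * b ^ (k - i) / (INR (fact i) * INR (fact (k - i)))) (S k)).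
  apply RtoC_fsum.
  unfold Rdiv at 2. generalize (S k). intros n. induction n; simpl. ring.
  rewrite IHn. unfold Binomial.C. pose proof (fact_pos k). pose proof (fact_pos n). pose proof (fact_pos (k - n)).
  field. lra.
Qed.

Lemma coef_id m n r : (r <= m)%nat -> (r <= n)%nat ->
  bin m r * ff n r * / (INR (fact m) * INR (fact n)) =
  / (INR (fact r) * INR (fact (m - r)) * INR (fact (n - r))).
Proof.
  intros h1 h2. pose proof (bin_fact m r h1). pose proof (ff_fact n r h2).
  pose proof (fact_pos m). pose proof (fact_pos n). pose proof (fact_pos r).
  pose proof (fact_pos (m - r)). pose proof (fact_pos (n - r)).
  assert (bin m r <> 0) by (intro Hz; rewrite Hz, !Rmult_0_l in H; lra).
  assert (ff n r <> 0) by (intro Hz; rewrite Hz, !Rmult_0_l in H0; lra).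
  rewrite <- H, <- H0. field. repeat split; lra.
Qed.

Section Core.
Variable c : C.
Variable G : nat -> C.
Hypothesis hG : forall j, G j = ((c + RtoC (INR j)) * G (S j))%C.

Lemma G_shift j k : G j = (rising (c + RtoC (INR j)) k * G (j + k)%nat)%C.
Proof.
  induction k. simpl. rewrite Nat.add_0_r. ring.
  rewrite IHk. rewrite (hG (j + k)%nat). replace (j + S k)%nat with (S (j + k)) by lia.
  change (rising (c + RtoC (INR j)) (S k)) with (rising (c + RtoC (INR j)) k * (c + RtoC (INR j) + RtoC (INR k)))%C.
  rewrite plus_INR, RtoC_plus. ring.
Qed.

Definition CIt m n r : C :=
  if andb (r <=? m)%nat (r <=? n)%nat then (G r * RtoC (/ (INR (fact r) * INR (fact (m - r)) * INR (fact (n - r)))))%C else 0%C.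

Lemma CI m n :
  (G m * G n * RtoC (/ (INR (fact m) * INR (fact n))))%C =
  (G (m + n) * fsum (CIt m n) (S (m + n)))%C.
Proof.
  replace (S (m + n)) with (S m + n)%nat by lia. rewrite fsum_split.
  rewrite (fsum_zero (fun i => CIt m n (S m + i)%nat)).
  2:{ intros i hi. unfold CIt. destruct (Nat.leb_spec (S m + i)%nat m). lia. reflexivity. }
  rewrite (G_shift n m). rewrite vandermonde. replace (n + m)%nat with (m + n)%nat by lia.
  transitivity (G (m + n) * ((G m * RtoC (/ (INR (fact m) * INR (fact n)))) *
     fsum (fun r => RtoC (bin m r * ff n r) * rising (c + RtoC (INR r)) (m - r))%C (S m)))%C. ring.
  rewrite <- fsum_scal_l. f_equal. rewrite Cplus_0_r. apply fsum_ext. intros r hr.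
  unfold CIt. destruct (Nat.leb_spec r m); [|lia]. simpl andb.
  destruct (Nat.leb_spec r n).
  - rewrite (G_shift r (m - r)). replace (r + (m - r))%nat with m by lia.
    rewrite <- (coef_id m n r) by lia. rewrite !RtoC_mult. ring.
  - rewrite (ff_zero n r) by lia. rewrite Rmult_0_r. ring.
Qed.

Definition Tt (a b : R) (d r m : nat) : C :=
  if andb (r <=? m)%nat (r <=? d - m)%nat then
    (RtoC (a ^ m * b ^ (d - m)) * G d * (G r * RtoC (/ (INR (fact r) * INR (fact (m - r)) * INR (fact (d - m - r))))))%C
  else 0%C.

Lemma claimL (a b : R) d m : (m <= d)%nat ->
  ((RtoC (a ^ m / INR (fact m)) * G m) * (RtoC (b ^ (d - m) / INR (fact (d - m))) * G (d - m)))%C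
  = fsum (fun r => Tt a b d r m) (S d).
Proof.
  intros hm.
  transitivity (RtoC (a ^ m * b ^ (d - m)) * (G m * G (d - m) * RtoC (/ (INR (fact m) * INR (fact (d - m))))))%C.
  { unfold Rdiv. rewrite !RtoC_mult. rewrite Rinv_mult, RtoC_mult. ring. }
  rewrite CI. replace (m + (d - m))%nat with d by lia.
  rewrite Cmult_assoc, <- fsum_scal_l. apply fsum_ext. intros r hr.
  unfold CIt, Tt. destruct (andb (r <=? m)%nat (r <=? d - m)%nat). ring. ring.
Qed.
End Core.

Section Core2.
Variable c : C.
Variable G : nat -> C.
Hypothesis hG : forall j, G j = ((c + RtoC (INR j)) * G (S j))%C.

Definition Xt (a b : R) (r : nat) : C := (RtoC ((a * b) ^ r / INR (fact r)) * G r)%C.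
Definition Yt (a b : R) (r k : nat) : C := (RtoC ((a + b) ^ k / INR (fact k)) * G (2 * r + k)%nat)%C.
Definition Pt (a : R) (m : nat) : C := (RtoC (a ^ m / INR (fact m)) * G m)%C.

Lemma claimR a b d r :
  (if (2 * r <=? d)%nat then (Xt a b r * Yt a b r (d - 2 * r))%C else 0%C) = fsum (fun m => Tt G a b d r m) (S d).
Proof.
  destruct (Nat.leb_spec (2 * r) d) as [h|h].
  - set (k := (d - 2 * r)%nat).
    assert (Ed : d = (2 * r + k)%nat) by (unfold k; lia).
    unfold Xt, Yt. rewrite <- Ed. rewrite binom_exp.
    replace (S d) with (r + S k + r)%nat by lia. rewrite !fsum_split.
    rewrite (fsum_zero (fun i => Tt G a b d r i)).
    2:{ intros i hi. unfold Tt. destruct (Nat.leb_spec r i). lia. reflexivity. }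
    rewrite (fsum_zero (fun i => Tt G a b d r (r + S k + i)%nat)).
    2:{ intros i hi. unfold Tt. destruct (Nat.leb_spec r (d - (r + S k + i))%nat). lia. rewrite Bool.andb_false_r. reflexivity. }
    rewrite Cplus_0_l, Cplus_0_r.
    rewrite <- fsum_scal_r, <- fsum_scal_l. apply fsum_ext. intros j hj.
    unfold Tt. destruct (Nat.leb_spec r (r + j)%nat); [|lia]. destruct (Nat.leb_spec r (d - (r + j))%nat); [|lia].
    simpl andb.
    replace (r + j - r)%nat with j by lia. replace (d - (r + j) - r)%nat with (k - j)%nat by lia.
    replace (d - (r + j))%nat with (r + (k - j))%nat by lia.
    assert (E : (a * b) ^ r / INR (fact r) * (a ^ j * b ^ (k - j) / (INR (fact j) * INR (fact (k - j))))
               = a ^ (r + j) * b ^ (r + (k - j)) * / (INR (fact r) * INR (fact j) * INR (fact (k - j)))).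
    { rewrite !pow_add, Rpow_mult_distr. pose proof (fact_pos r). pose proof (fact_pos j). pose proof (fact_pos (k - j)).
      field. lra. }
    transitivity (RtoC ((a * b) ^ r / INR (fact r) * (a ^ j * b ^ (k - j) / (INR (fact j) * INR (fact (k - j))))) * G r * G d)%C.
    rewrite RtoC_mult. ring.
    rewrite E, RtoC_mult. ring.
  - symmetry. apply fsum_zero. intros m hm. unfold Tt.
    destruct (Nat.leb_spec r m); destruct (Nat.leb_spec r (d - m)); simpl; try reflexivity. lia.
Qed.

Lemma perdeg a b d :
  fsum (fun m => if (m <=? d)%nat then (Pt a m * Pt b (d - m))%C else 0%C) (S d) =
  fsum (fun r => if (2 * r <=? d)%nat then (Xt a b r * Yt a b r (d - 2 * r))%C else 0%C) (S d).
Proof.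
  rewrite (fsum_ext _ (fun m => fsum (fun r => Tt G a b d r m) (S d))).
  2:{ intros m hm. destruct (Nat.leb_spec m d); [|lia]. unfold Pt. apply (claimL c G hG). lia. }
  rewrite fsum_swap. apply fsum_ext. intros r hr. symmetry. apply claimR.
Qed.
End Core2.

Lemma exp_series x : is_series (fun k => x ^ k / INR (fact k)) (exp x).
Proof.
  pose proof (is_exp_Reals x) as H. unfold is_pseries in H.
  eapply is_series_ext; [|exact H]. intros n. simpl. rewrite pow_n_pow. reflexivity.
Qed.

Lemma ex_exp_abs z : ex_series (fun k => Rabs z ^ k / INR (fact k)).
Proof. eexists. apply exp_series. Qed.

Lemma exp_psum_le z n : sum_n (fun k => Rabs z ^ k / INR (fact k)) n <= exp (Rabs z).
Proof.
  rewrite <- (is_series_unique _ _ (exp_series (Rabs z))).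
  apply psum_le. intros k. apply Rdiv_le_0_compat. apply pow_le, Rabs_pos. apply fact_pos.
  apply ex_exp_abs.
Qed.

Lemma Cmod_term (z : R) (h : C) k : Cmod (RtoC (z ^ k / INR (fact k)) * h)%C = Rabs z ^ k / INR (fact k) * Cmod h.
Proof.
  rewrite Cmod_mult, Cmod_R. f_equal. rewrite Rabs_div by (apply not_0_INR, fact_neq_0).
  rewrite <- RPow_abs. rewrite (Rabs_right (INR (fact k))). auto. left; apply fact_pos.
Qed.

Lemma Clim_sub (u : nat -> C) l i : Clim u l -> Clim (fun N => u (N - i)%nat) l.
Proof.
  rewrite !Clim_spec. intros H eps. destruct (H eps) as [N HN]. exists (N + i)%nat. intros n hn. apply HN. lia.
Qed.

Lemma is_series_Cscal_r (a : nat -> C) l (k : C) : is_series a l -> is_series (fun n => a n * k)%C (l * k)%C.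
Proof.
  intros H. pose proof (@is_series_scal_l C_AbsRing C_NormedModule k a l H) as H'.
  replace (l * k)%C with (k * l)%C by ring.
  apply (is_series_ext (fun n => scal k (a n))). intros n. change (@eq C (k * a n)%C (a n * k)%C). ring.
  exact H'.
Qed.

Section Assembly.
Variable c : C.
Variable G : nat -> C.
Hypothesis hG : forall j, G j = ((c + RtoC (INR j)) * G (S j))%C.
Variable MG : R.
Hypothesis hMG : forall j, Cmod (G j) <= MG.

Lemma MG_nonneg : 0 <= MG.
Proof. eapply Rle_trans. apply Cmod_ge_0. apply (hMG 0%nat). Qed.

Lemma ser_bound (z : R) (H : nat -> C) : (forall k, Cmod (H k) <= MG) ->
  forall k, Cmod (RtoC (z ^ k / INR (fact k)) * H k)%C <= MG * (Rabs z ^ k / INR (fact k)).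
Proof.
  intros hH k. rewrite Cmod_term. rewrite Rmult_comm. apply Rmult_le_compat_r.
  apply Rdiv_le_0_compat. apply pow_le, Rabs_pos. apply fact_pos. auto.
Qed.

Lemma ser_ex (z : R) (H : nat -> C) : (forall k, Cmod (H k) <= MG) ->
  ex_series (fun k => RtoC (z ^ k / INR (fact k)) * H k)%C.
Proof.
  intros hH. apply (@ex_series_le C_AbsRing C_CompleteNormedModule _ (fun k => MG * (Rabs z ^ k / INR (fact k)))).
  apply ser_bound; auto. apply (@ex_series_scal_l R_AbsRing R_NormedModule). apply ex_exp_abs.
Qed.

Lemma ser_psum (z : R) (H : nat -> C) : (forall k, Cmod (H k) <= MG) ->
  forall n, Cmod (sum_n (fun k => RtoC (z ^ k / INR (fact k)) * H k)%C n) <= MG * exp (Rabs z).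
Proof.
  intros hH n. rewrite sum_n_fsum. eapply Rle_trans. apply Cmod_fsum.
  pose proof (exp_psum_le z n) as E. rewrite sum_n_rsum in *.
  assert (forall m, rsum (fun k => Cmod (RtoC (z ^ k / INR (fact k)) * H k)%C) m <= MG * rsum (fun k => Rabs z ^ k / INR (fact k)) m).
  { intros m. induction m; simpl. lra. pose proof (ser_bound z H hH m). lra. }
  eapply Rle_trans. apply H0. apply Rmult_le_compat_l. apply MG_nonneg. auto.
Qed.

Lemma ser_correct (z : R) (H : nat -> C) : (forall k, Cmod (H k) <= MG) ->
  is_series (fun k => RtoC (z ^ k / INR (fact k)) * H k)%C (CSeries (fun k => RtoC (z ^ k / INR (fact k)) * H k)%C).
Proof.
  intros hH. destruct (ser_ex z H hH) as [l Hl]. rewrite (CSeries_eq _ _ Hl). auto.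
Qed.

Lemma core (a b : R) :
  is_series (fun r => Xt G a b r * CSeries (Yt G a b r))%C (CSeries (Pt G a) * CSeries (Pt G b))%C.
Proof.
  set (K1 := fun i k => (Pt G a i * Pt G b k)%C).
  set (K2 := fun r k => (Xt G a b r * Yt G a b r k)%C).
  assert (hPb : forall k, Cmod (G k) <= MG) by auto.
  assert (HPa := ser_correct a G hMG). assert (HPb := ser_correct b G hMG).
  fold (Pt G a) in HPa. fold (Pt G b) in HPb.
  assert (hY : forall r, forall k, Cmod (G (2 * r + k)%nat) <= MG) by auto.
  destruct (tannery (fun N i => tt 1 K1 N i) (fun i => Pt G a i * CSeries (Pt G b))%C
              (fun i => Cmod (Pt G a i) * (MG * exp (Rabs b)))) as [S1 [HS1 HL1]].
  - intros i. apply (Clim_ext_loc (fun N => Pt G a i * sum_n (Pt G b) (N - i))%C).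
    { exists i. intros N hN. unfold tt. rewrite Nat.mul_1_l. destruct (Nat.leb_spec i N); [|lia].
      unfold K1. rewrite fsum_scal_l, sum_n_fsum. reflexivity. }
    apply Clim_mult. apply Clim_const. apply Clim_sub. exact HPb.
  - intros N i. unfold tt. rewrite Nat.mul_1_l. destruct (Nat.leb_spec i N).
    + unfold K1. rewrite fsum_scal_l, Cmod_mult. apply Rmult_le_compat_l. apply Cmod_ge_0.
      rewrite <- sum_n_fsum. apply ser_psum; auto.
    + rewrite Cmod_0. apply Rmult_le_pos. apply Cmod_ge_0. apply Rmult_le_pos. apply MG_nonneg. left; apply exp_pos.
  - apply ex_series_scal_r. 
    apply (@ex_series_le R_AbsRing R_CompleteNormedModule _ (fun k => MG * (Rabs a ^ k / INR (fact k)))).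
    intros n. change (norm (Cmod (Pt G a n))) with (Rabs (Cmod (Pt G a n))). rewrite Rabs_right by (apply Rle_ge, Cmod_ge_0).
    apply ser_bound; auto. apply (@ex_series_scal_l R_AbsRing R_NormedModule). apply ex_exp_abs.
  - intros N i hi. apply tt_zero. lia. lia.
  -
    destruct (tannery (fun N r => tt 2 K2 N r) (fun r => Xt G a b r * CSeries (Yt G a b r))%C
              (fun r => Cmod (Xt G a b r) * (MG * exp (Rabs (a + b))))) as [S2 [HS2 HL2]].
    + intros r. apply (Clim_ext_loc (fun N => Xt G a b r * sum_n (Yt G a b r) (N - 2 * r))%C).
      { exists (2 * r)%nat. intros N hN. unfold tt. destruct (Nat.leb_spec (2 * r) N); [|lia].
        unfold K2. rewrite fsum_scal_l, sum_n_fsum. reflexivity. }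
      apply Clim_mult. apply Clim_const. apply Clim_sub. apply ser_correct. auto.
    + intros N r. unfold tt. destruct (Nat.leb_spec (2 * r) N).
      * unfold K2. rewrite fsum_scal_l, Cmod_mult. apply Rmult_le_compat_l. apply Cmod_ge_0.
        rewrite <- sum_n_fsum. apply ser_psum; auto.
      * rewrite Cmod_0. apply Rmult_le_pos. apply Cmod_ge_0. apply Rmult_le_pos. apply MG_nonneg. left; apply exp_pos.
    + apply ex_series_scal_r.
      apply (@ex_series_le R_AbsRing R_CompleteNormedModule _ (fun k => MG * (Rabs (a * b) ^ k / INR (fact k)))).
      intros n. change (norm (Cmod (Xt G a b n))) with (Rabs (Cmod (Xt G a b n))). rewrite Rabs_right by (apply Rle_ge, Cmod_ge_0).
      apply ser_bound; auto. apply (@ex_series_scal_l R_AbsRing R_NormedModule). apply ex_exp_abs.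
    + intros N i hi. apply tt_zero. lia. lia.
    + assert (E : S1 = S2).
      { apply (Clim_unique (fun N => fsum (tt 1 K1 N) (S N))); auto.
        eapply Clim_ext; [|exact HL2]. intros N.
        rewrite !triangle by lia. apply fsum_ext. intros d hd.
        rewrite (fsum_ext (dd 1 K1 d) (fun m => if (m <=? d)%nat then (Pt G a m * Pt G b (d - m))%C else 0%C)).
        2:{ intros i hi. unfold dd, K1. rewrite Nat.mul_1_l. reflexivity. }
        rewrite (perdeg c G hG). apply fsum_ext. intros r hr. unfold dd, K2. reflexivity. }
      assert (E1 : S1 = (CSeries (Pt G a) * CSeries (Pt G b))%C).
      { apply (Clim_unique (sum_n (fun i => Pt G a i * CSeries (Pt G b))%C)). exact HS1.
        apply is_series_Cscal_r. exact HPa. }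
      rewrite <- E1, E. exact HS2.
Qed.
End Assembly.

Lemma nat_above (x : R) : exists K : nat, x <= INR K.
Proof.
  destruct (Rle_or_lt x 0). exists 0%nat. simpl. lra.
  destruct (archimed x) as [h1 h2].
  exists (Z.to_nat (up x)). rewrite INR_IZR_INZ. rewrite ZifyInst.of_nat_to_nat_eq. rewrite Z.max_r. lra.
  apply le_IZR. lra.
Qed.

Lemma rsum_nonneg (f : nat -> R) n : (forall i, 0 <= f i) -> 0 <= rsum f n.
Proof. intros hp. induction n; simpl. lra. pose proof (hp n). lra. Qed.

Lemma rsum_term (f : nat -> R) n j : (forall i, 0 <= f i) -> (j < n)%nat -> f j <= rsum f n.
Proof.
  intros hp. induction n; intros hj. lia. simpl. destruct (Nat.eq_dec j n).
  subst. pose proof (rsum_nonneg f n hp).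
  lra. pose proof (hp n). assert (f j <= rsum f n) by (apply IHn; lia). lra.
Qed.

Section Main.
Variable nu : C.
Definition GG (k : nat) : C := rgamma (nu + RtoC (INR (S k)))%C.

Lemma GG_rec j : GG j = (((nu + 1) + RtoC (INR j)) * GG (S j))%C.
Proof.
  unfold GG. rewrite rgamma_rec. f_equal. rewrite S_INR, RtoC_plus. ring.
  f_equal. rewrite !S_INR, !RtoC_plus. ring.
Qed.

Lemma GG_bound : exists MG, forall j, Cmod (GG j) <= MG.
Proof.
  destruct (nat_above (Cmod nu)) as [K HK].
  exists (rsum (fun j => Cmod (GG j)) (S K)).
  assert (Hdec : forall j, (K <= j)%nat -> Cmod (GG (S j)) <= Cmod (GG j)).
  { intros j hj. rewrite (GG_rec j). rewrite Cmod_mult.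
    assert (1 <= Cmod (nu + 1 + RtoC (INR j))%C).
    { pose proof (Cmod_triangle (nu + 1 + RtoC (INR j))%C (- nu)%C) as T.
      replace (nu + 1 + RtoC (INR j) + - nu)%C with (RtoC (INR j + 1)) in T
        by (rewrite RtoC_plus; ring).
      rewrite Cmod_R, Cmod_opp in T. rewrite Rabs_right in T by (pose proof (pos_INR j); lra).
      pose proof (le_INR _ _ hj). lra. }
    pose proof (Cmod_ge_0 (GG (S j))). nra. }
  assert (Ht : forall t, Cmod (GG (K + t)%nat) <= rsum (fun j => Cmod (GG j)) (S K)).
  { induction t. rewrite Nat.add_0_r. apply (rsum_term (fun j => Cmod (GG j))). intros; apply Cmod_ge_0. lia.
    rewrite Nat.add_succ_r. eapply Rle_trans. apply Hdec. lia. auto. }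
  intros j. destruct (Nat.le_gt_cases j K).
  apply (rsum_term (fun j => Cmod (GG j))). intros; apply Cmod_ge_0. lia.
  replace j with (K + (j - K))%nat by lia. apply Ht.
Qed.
End Main.

Lemma CSeries_ext f g : (forall k, f k = g k) -> CSeries f = CSeries g.
Proof. intros H. f_equal. apply functional_extensionality. auto. Qed.

Theorem mainTheorem12 (nu : C) (a b x : R) (ha : 0 < a) (hb : 0 < b) (hx : 0 < x) :
  is_series
    (fun r : nat =>
       Cmult (Rcpow (a * b * x / (2 * sqrt (a ^ 2 + b ^ 2))) nu)
         (Cmult (RtoC ((a * b * x / (2 * sqrt (a ^ 2 + b ^ 2))) ^ (2 * r) / INR (fact r)))
           (Cmult (rgamma (Cplus nu (RtoC (INR (S r)))))
                  (BesselJ (Cplus nu (RtoC (INR (2 * r)))) (x * sqrt (a ^ 2 + b ^ 2))))))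
    (Cmult (BesselJ nu (a * x)) (BesselJ nu (b * x))).
Proof.
  destruct (GG_bound nu) as [MG HMG].
  set (s := sqrt (a ^ 2 + b ^ 2)).
  assert (hs2 : s * s = a ^ 2 + b ^ 2) by (unfold s; apply sqrt_sqrt; nra).
  assert (hs : 0 < s) by (unfold s; apply sqrt_lt_R0; nra).
  set (t := a * b * x / (2 * s)).
  set (A := - ((a * x / 2) ^ 2)). set (B := - ((b * x / 2) ^ 2)).
  pose proof (core (nu + 1) (GG nu) (GG_rec nu) MG HMG A B) as HC.
  set (Kc := (Rcpow (a * x / 2) nu * Rcpow (b * x / 2) nu)%C).
  pose proof (@is_series_scal_l C_AbsRing C_NormedModule Kc _ _ HC) as HK.
  assert (EL : (BesselJ nu (a * x) * BesselJ nu (b * x))%C = scal Kc (CSeries (Pt (GG nu) A) * CSeries (Pt (GG nu) B))%C).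
  { assert (EA : forall y : R, y = A \/ y = B -> forall z, y = - (z ^ 2) ->
      CSeries (fun k => (RtoC ((-1) ^ k / INR (fact k) * z ^ (2 * k)) * rgamma (nu + RtoC (INR (S k))))%C)
      = CSeries (Pt (GG nu) y)).
    { intros y _ z hz. apply CSeries_ext. intros k. unfold Pt, GG. f_equal. f_equal. rewrite pow_mult, hz.
      replace ((- (z ^ 2)) ^ k) with ((-1) ^ k * (z ^ 2) ^ k)
        by (rewrite <- Rpow_mult_distr; f_equal; ring).
      field. apply not_0_INR, fact_neq_0. }
    unfold BesselJ. change (scal Kc ?y) with (Kc * y)%C. unfold Kc.
    rewrite (EA A (or_introl eq_refl) (a * x / 2) eq_refl).
    rewrite (EA B (or_intror eq_refl) (b * x / 2) eq_refl). ring. }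
  rewrite EL. eapply is_series_ext; [|exact HK].
  intros r. change (scal Kc ?y) with (Kc * y)%C. fold s. fold t.
  unfold BesselJ.
  assert (EY : CSeries (fun k => (RtoC ((-1) ^ k / INR (fact k) * (x * s / 2) ^ (2 * k)) * rgamma (nu + RtoC (INR (2 * r)) + RtoC (INR (S k))))%C) = CSeries (Yt (GG nu) A B r)).
  { apply CSeries_ext. intros k. unfold Yt, GG. f_equal.
      - f_equal. rewrite pow_mult.
        replace ((x * s / 2) ^ 2) with (- (A + B)) by (unfold A, B; simpl; nra).
        replace ((- (A + B)) ^ k) with ((-1) ^ k * (A + B) ^ k)
          by (rewrite <- Rpow_mult_distr; f_equal; ring).
        assert (Hm : (-1) ^ k * (-1) ^ k = 1) by (rewrite <- Rpow_mult_distr; replace (-1 * -1) with 1 by ring; apply pow1).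
        unfold Rdiv. transitivity ((-1) ^ k * (-1) ^ k * (A + B) ^ k * / INR (fact k)). ring. rewrite Hm. ring.
      - f_equal. rewrite !S_INR, plus_INR, !RtoC_plus. ring. }
  rewrite EY.
  rewrite Rcpow_add, (Rcpow_nat (x * s / 2)) by (apply Rdiv_lt_0_compat; [apply Rmult_lt_0_compat|]; lra).
  unfold Xt, Kc.
  assert (Et : t * (x * s / 2) = (a * x / 2) * (b * x / 2)) by (unfold t; field; lra).
  assert (ht : 0 < t) by (unfold t; apply Rdiv_lt_0_compat; [repeat apply Rmult_lt_0_compat|]; lra).
  assert (hX : 0 < x * s / 2) by (apply Rdiv_lt_0_compat; [apply Rmult_lt_0_compat|]; lra).
  assert (EP : (Rcpow t nu * Rcpow (x * s / 2) nu)%C = (Rcpow (a * x / 2) nu * Rcpow (b * x / 2) nu)%C).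
  { rewrite <- Rcpow_mul by auto. rewrite Et. apply Rcpow_mul; apply Rdiv_lt_0_compat; try apply Rmult_lt_0_compat; lra. }
  assert (EQ : t ^ (2 * r) / INR (fact r) * (x * s / 2) ^ (2 * r) = (A * B) ^ r / INR (fact r)).
  { transitivity ((t * (x * s / 2)) ^ (2 * r) / INR (fact r)).
    rewrite Rpow_mult_distr. field. apply not_0_INR, fact_neq_0.
    rewrite Et. rewrite pow_mult. f_equal. f_equal. unfold A, B. ring. }
  unfold GG at 1. rewrite <- EP. rewrite <- EQ. rewrite RtoC_mult. match goal with |- ?l = ?r => change (@eq C l r) end. ring.
Qed.
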